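(* Let $A_o,A_i\in\mathbb R^{n_y\times n_x}$, let $B_o,B_i\in\mathbb R^{n_y\times n_y}$ and $C_o,C_i\in\mathbb R^{n_x\times n_x}$ be invertible. The outer inclusion $y\in\{(A_o+B_o\Delta C_o)x:\|\Delta\|\le1\}$ contains the inner inclusion $y\in\{(A_i+B_i\Delta C_i)x:\|\Delta\|\le1\}$ if and only if $$\|\tilde A+\tilde B\Delta\tilde C\|\le 1\quad\text{for all }\Delta\in\mathbb C^{n_y\times n_x}\text{ with }\|\Delta\|\le1,$$ where $\tilde B=B_o^{-1}B_i$, $\tilde A=B_o^{-1}(A_i-A_o)C_o^{-1}$, $\tilde C=C_iC_o^{-1}$.
   Context: $\|\cdot\|$ is the spectral norm. The outer inclusion contains the inner one if every pair $(x,y)\in\mathbb C^{n_x}\times\mathbb C^{n_y}$ satisfying the inner inclusion also satisfies the outer inclusion. *)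

(* Defs.v *)
From HB Require Import structures.
From mathcomp Require Import all_boot all_order all_algebra.
From mathcomp Require Import complex.
From mathcomp Require Import boolp classical_sets reals.
Set Implicit Arguments. Unset Strict Implicit. Unset Printing Implicit Defensive.
Import Order.TTheory GRing.Theory Num.Theory.
Local Open Scope ring_scope.
Local Open Scope complex_scope.

Definition vnorm (R : realType) (n : nat) (x : 'cV[R[i]]_n) : R :=
  Num.sqrt (\sum_(k < n) (@complex.Re R (x k ord0) ^+ 2 + @complex.Im R (x k ord0) ^+ 2)).

Definition specnorm (R : realType) (m n : nat) (M : 'M[R[i]]_(m, n)) : R :=
  sup [set r : R | exists x : 'cV[R[i]]_n, vnorm x <= 1 /\ r = vnorm (M *m x)].

Definition cmx (R : realType) (m n : nat) (M : 'M[R]_(m, n)) : 'M[R[i]]_(m, n) :=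
  map_mx (fun r => r%:C) M.

Definition incl (R : realType) (ny nx : nat)
  (A : 'M[R]_(ny, nx)) (B : 'M[R]_ny) (C : 'M[R]_nx)
  (x : 'cV[R[i]]_nx) (y : 'cV[R[i]]_ny) : Prop :=
  exists Delta : 'M[R[i]]_(ny, nx),
    specnorm Delta <= 1 /\ y = (cmx A + cmx B *m Delta *m cmx C) *m x.

(* Main.v *)
Require Import Defs.
From mathcomp Require Import all_boot all_order all_algebra.
From mathcomp Require Import complex.
From mathcomp Require Import boolp classical_sets reals.
From mathcomp Require Import ring.
Set Implicit Arguments. Unset Strict Implicit.
Import Order.TTheory GRing.Theory Num.Theory.
Local Open Scope ring_scope.
Section Aux.
Variable R : realType.
Local Notation C := (R[i]).

Definition cn (x : C) : C := x * x^*.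
Definition N2 n (v : 'cV[C]_n) : C := \sum_(k < n) cn (v k ord0).
Definition S2 n (v : 'cV[C]_n) : R :=
  \sum_(k < n) (@complex.Re R (v k ord0) ^+ 2 + @complex.Im R (v k ord0) ^+ 2).

Lemma cn_ge0 x : 0 <= cn x. Proof. exact: mul_conjC_ge0. Qed.

Lemma cnE x : cn x = ((@complex.Re R x) ^+ 2 + (@complex.Im R x) ^+ 2)%:C%C.
Proof. case: x => a b; rewrite /cn /=; simpc. by rewrite !expr2 (mulrC b a) addNr. Qed.

Lemma N2E n (v : 'cV[C]_n) : N2 v = (S2 v)%:C%C.
Proof. rewrite /N2 /S2 rmorph_sum; apply: eq_bigr => k _; exact: cnE. Qed.

Lemma S2_ge0 n (v : 'cV[C]_n) : 0 <= S2 v.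
Proof. apply: sumr_ge0 => k _; apply: addr_ge0; exact: sqr_ge0. Qed.

Lemma vnormE n (v : 'cV[C]_n) : vnorm v = Num.sqrt (S2 v).
Proof. by []. Qed.

Lemma vnorm_le n m (a : 'cV[C]_n) (b : 'cV[C]_m) : (vnorm a <= vnorm b) = (N2 a <= N2 b).
Proof. by rewrite !vnormE ler_sqrt ?S2_ge0 // !N2E lecR. Qed.

Lemma vnorm_le1 n (a : 'cV[C]_n) : (vnorm a <= 1) = (N2 a <= 1).
Proof. by rewrite vnormE -sqrtr1 ler_sqrt // N2E -[1 in RHS]/(((1:R)%:C)%C) lecR. Qed.

Lemma N2_ge0 n (v : 'cV[C]_n) : 0 <= N2 v.
Proof. apply: sumr_ge0 => k _; exact: cn_ge0. Qed.

Lemma cn_conj x : cn x^* = cn x.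
Proof. by rewrite /cn conjCK mulrC. Qed.

Lemma conj_cn x : (cn x)^* = cn x.
Proof. by rewrite /cn rmorphM /= conjCK mulrC. Qed.

Lemma conj_N2 n (v : 'cV[C]_n) : (N2 v)^* = N2 v.
Proof. rewrite /N2 rmorph_sum; apply: eq_bigr => k _; exact: conj_cn. Qed.

Lemma cnM x y : cn (x * y) = cn x * cn y.
Proof. rewrite /cn rmorphM; ring. Qed.

Lemma cn_eq0 x : (cn x == 0) = (x == 0).
Proof. exact: mul_conjC_eq0. Qed.

Lemma N2_eq0 n (v : 'cV[C]_n) : N2 v = 0 -> v = 0.
Proof.
move=> /psumr_eq0P H; apply/matrixP => k j; rewrite (ord1 j) mxE.
apply/eqP; rewrite -cn_eq0; apply/eqP; apply: H => // i _; exact: cn_ge0.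
Qed.

Lemma N2Z n (c : C) (v : 'cV[C]_n) : N2 (c *: v) = cn c * N2 v.
Proof. rewrite /N2 mulr_sumr; apply: eq_bigr => k _; by rewrite mxE cnM. Qed.

Lemma N20 n : N2 (0 : 'cV[C]_n) = 0.
Proof. by rewrite -(scale0r 0) N2Z /cn mul0r mul0r. Qed.


Lemma CS n (a b : 'I_n -> C) :
  cn (\sum_k a k * b k) <= (\sum_k cn (a k)) * (\sum_k cn (b k)).
Proof.
set c := \sum_k a k * b k; set A := \sum_k cn (a k); set B := \sum_k cn (b k).
have A0 : 0 <= A by apply: sumr_ge0 => k _; exact: cn_ge0.
have B0 : 0 <= B by apply: sumr_ge0 => k _; exact: cn_ge0.
case: (eqVneq A 0) => [Ae|Anz].
  have ak : forall k, a k = 0.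
    move=> k; apply/eqP; rewrite -cn_eq0; apply/eqP.
    by apply: (psumr_eq0P (P := predT)) Ae _ _ => // i _; exact: cn_ge0.
  have -> : c = 0 by rewrite /c big1 // => k _; rewrite ak mul0r.
  by rewrite /cn mul0r Ae mul0r.
have Apos : 0 < A by rewrite lt_def Anz A0.
have conjA : A^* = A by rewrite /A rmorph_sum; apply: eq_bigr => k _; exact: conj_cn.
have cc : \sum_k (a k * b k)^* = c^* by rewrite /c rmorph_sum.
have key : \sum_k cn (A * b k - c * (a k)^*) = A * (A * B - cn c).
  transitivity (\sum_k (A * A * cn (b k) - A * c^* * (a k * b k)
       - A * c * (a k * b k)^* + c * c^* * cn (a k))).
    apply: eq_bigr => k _; rewrite /cn !rmorphB /= !rmorphM /= conjA conjCK; ring.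
  rewrite big_split /= !sumrB -!mulr_sumr cc -/A -/B -/c /cn; ring.
have : 0 <= A * (A * B - cn c).
  by rewrite -key; apply: sumr_ge0 => k _; exact: cn_ge0.
by rewrite pmulr_rge0 // subr_ge0.
Qed.

Lemma N2_mul_le m n (M : 'M[C]_(m, n)) (x : 'cV[C]_n) :
  N2 (M *m x) <= (\sum_i \sum_j cn (M i j)) * N2 x.
Proof.
rewrite /N2 mulr_suml; apply: ler_sum => i _; rewrite mxE; exact: CS.
Qed.

Lemma specnorm_le1 m n (M : 'M[C]_(m, n)) :
  specnorm M <= 1 <-> forall z, N2 (M *m z) <= N2 z.
Proof.
split; last first.
  move=> H; apply: ge_sup.
    exists (vnorm (M *m 0)), 0; split => //.
    by rewrite vnorm_le1 N20 ler01.
  move=> r [x [hx ->]]; rewrite vnorm_le1 in hx *.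
  by rewrite vnorm_le1; exact: le_trans (H x) hx.
move=> Hs.
set k : R := \sum_i \sum_j ((@complex.Re R (M i j)) ^+ 2 + (@complex.Im R (M i j)) ^+ 2).
have Kk : \sum_i \sum_j cn (M i j) = (k%:C)%C.
  rewrite /k rmorph_sum; apply: eq_bigr => i _; rewrite rmorph_sum.
  by apply: eq_bigr => j _; exact: cnE.
have K0 : 0 <= \sum_i \sum_j cn (M i j).
  by apply: sumr_ge0 => i _; apply: sumr_ge0 => j _; exact: cn_ge0.
have ub : has_ubound [set r : R | exists x : 'cV[C]_n, vnorm x <= 1 /\ r = vnorm (M *m x)].
  exists (Num.sqrt k) => r [x [hx ->]].
  rewrite vnormE ler_sqrt; last by rewrite -lecR -Kk.
  rewrite -lecR -N2E -Kk; apply: le_trans (N2_mul_le M x) _.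
  rewrite -[X in _ <= X]mulr1; apply: ler_wpM2l => //.
  by rewrite -vnorm_le1.
have H1 : forall x : 'cV[C]_n, N2 x <= 1 -> N2 (M *m x) <= 1.
  move=> x hx; rewrite -vnorm_le1; apply: le_trans Hs.
  by apply: (ub_le_sup ub); exists x; split => //; rewrite vnorm_le1.
move=> z; case: (eqVneq (N2 z) 0) => [/N2_eq0 ->|nz].
  by rewrite mulmx0 !N20.
set s := S2 z.
have sz : N2 z = (s%:C)%C by rewrite N2E.
have s0 : 0 < s by rewrite lt_def S2_ge0 andbT; apply: contra nz => /eqP; rewrite sz => ->.
set c : C := (((Num.sqrt s)^-1)%:C)%C.
have cnc : cn c = (N2 z)^-1.
  rewrite cnE /= sz -fmorphV; congr (_ %:C)%C.
  by rewrite expr0n /= addr0 exprVn sqr_sqrtr // ltW.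
have := H1 (c *: z); rewrite -scalemxAr !N2Z cnc mulVf // => /(_ (lexx _)) h.
rewrite -[N2 (M *m z)](mulVKf nz) -[X in _ <= X]mulr1.
by apply: ler_wpM2l => //; exact: N2_ge0.
Qed.


Lemma rank_one m n (z : 'cV[C]_n) (w : 'cV[C]_m) :
  N2 w <= N2 z -> exists D : 'M[C]_(m, n), specnorm D <= 1 /\ D *m z = w.
Proof.
move=> hw; case: (eqVneq (N2 z) 0) => [z0|nz].
  have w0 : N2 w = 0 by apply/eqP; rewrite eq_le N2_ge0 andbT -z0.
  exists 0; split; last by rewrite mul0mx (N2_eq0 w0).
  by apply/specnorm_le1 => u; rewrite mul0mx N20 N2_ge0.
set zs := (map_mx Num.conj z)^T.
have zsu : forall u : 'cV[C]_n, zs *m u = (\sum_k (z k ord0)^* * u k ord0)%:M.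
  move=> u; rewrite [LHS]mx11_scalar mxE; congr (_%:M).
  by apply: eq_bigr => k _; rewrite !mxE.
have cinv : cn (N2 z)^-1 = (N2 z)^-1 * (N2 z)^-1.
  by rewrite /cn fmorphV /= conj_N2.
exists ((N2 z)^-1 *: (w *m zs)); split.
  apply/specnorm_le1 => u.
  rewrite -scalemxAl -mulmxA zsu mul_mx_scalar scalerA !N2Z cnM.
  have hc := CS (fun k => (z k ord0)^*) (fun k => u k ord0).
  have e1 : \sum_k cn (z k ord0)^* = N2 z by apply: eq_bigr => k _; exact: cn_conj.
  rewrite e1 in hc.
  have := ler_pM (cn_ge0 _) (N2_ge0 w) hc hw => h2.
  rewrite -mulrA; apply: le_trans (ler_wpM2l (cn_ge0 _) h2) _.
  rewrite cinv le_eqVlt; apply/orP; left; apply/eqP; rewrite [in RHS]/N2; field; exact: nz.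
rewrite -scalemxAl -mulmxA zsu mul_mx_scalar scalerA.
have -> : \sum_k (z k ord0)^* * z k ord0 = N2 z.
  by apply: eq_bigr => k _; rewrite /cn mulrC.
by rewrite mulVf // scale1r.
Qed.

End Aux.
Unset Implicit Arguments. Set Strict Implicit.
Section M.
Variable R : realType.
Lemma cmxM m n p (A : 'M[R]_(m, n)) (B : 'M[R]_(n, p)) : cmx (A *m B) = cmx A *m cmx B.
Proof. by rewrite /cmx map_mxM. Qed.
Lemma cmxB m n (A B : 'M[R]_(m, n)) : cmx (A - B) = cmx A - cmx B.
Proof. by rewrite /cmx map_mxB. Qed.
Lemma cmxV n (A : 'M[R]_n) : cmx (invmx A) = invmx (cmx A).
Proof. by rewrite /cmx map_invmx. Qed.
Lemma cmxU n (A : 'M[R]_n) : (cmx A \in unitmx) = (A \in unitmx).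
Proof. by rewrite /cmx map_unitmx. Qed.
End M.

Theorem lemma1 (R : realType) (ny nx : nat)
  (Ao Ai : 'M[R]_(ny, nx)) (Bo Bi : 'M[R]_ny) (Co Ci : 'M[R]_nx) :
  Bo \in unitmx -> Bi \in unitmx -> Co \in unitmx -> Ci \in unitmx ->
  (forall (x : 'cV[R[i]]_nx) (y : 'cV[R[i]]_ny),
      incl Ai Bi Ci x y -> incl Ao Bo Co x y)
  <->
  (forall Delta : 'M[R[i]]_(ny, nx),
      specnorm Delta <= 1 ->
      specnorm (cmx (invmx Bo *m (Ai - Ao) *m invmx Co)
                + cmx (invmx Bo *m Bi) *m Delta *m cmx (Ci *m invmx Co)) <= 1).
Proof.
move=> uBo _ uCo _.
rewrite /incl !(cmxM, cmxB, cmxV).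
rewrite -cmxU in uBo; rewrite -cmxU in uCo.
move: (cmx Ao) (cmx Ai) (cmx Bo) (cmx Bi) (cmx Co) (cmx Ci) uBo uCo.
move=> ao ai bo bi co ci ubo uco.
have key : forall (D : 'M_(ny, nx)) (x : 'cV[R[i]]_nx),
  (invmx bo *m (ai - ao) *m invmx co + invmx bo *m bi *m D *m (ci *m invmx co)) *m (co *m x)
  = invmx bo *m ((ai + bi *m D *m ci) *m x - ao *m x).
  move=> D x; rewrite mulmxDl -!mulmxA !(mulKmx uco) -mulmxDr; congr (_ *m _).
  by rewrite mulmxBl mulmxDl !mulmxA addrAC.

split.
  move=> H D hD; apply/specnorm_le1 => z.
  have zx : z = co *m (invmx co *m z) by rewrite (mulKVmx uco).
  rewrite zx key.
  have [D' [hD' ->]] := H (invmx co *m z) ((ai + bi *m D *m ci) *m (invmx co *m z)) (ex_intro _ D (conj hD erefl)).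
  rewrite mulmxDl addrAC subrr add0r -!mulmxA (mulKmx ubo).
  exact: (proj1 (specnorm_le1 D') hD').
move=> H x y [D [hD ey]].
have := (proj1 (specnorm_le1 _) (H D hD)) (co *m x); rewrite key -ey => hw.
have [D' [hD' eD']] := rank_one hw.
exists D'; split => //.
by rewrite mulmxDl -!mulmxA eD' (mulKVmx ubo) addrC subrK.
Qed.
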